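(* For every positive integer $k$, the cycle $C_{6k}$ is edge-critical for $3$ colours; hence $\{C_{6k}: k\in\mathbb{N}\}$ is an infinite family of edge-critical graphs for $3$ colours.
   Context: An undirected graph is identified with the directed graph having both arcs for each edge; $N^-(v)$ is the set of neighbours of $v$. For $q\ge2$ let $[q]=\{0,\dots,q-1\}$. A $D$-function over $[q]$ is a map $f=(f_v)_{v\in V}:[q]^V\to[q]^V$ with each $f_v(x)$ depending only on $(x_u)_{u\in N^-(v)}$. $D$ is $q$-solvable if some $D$-function $f$ over $[q]$ has the property that for every $x\in[q]^V$ there is $v$ with $f_v(x)=x_v$. An undirected graph $G$ is edge-critical for $q$ colours if $G$ is $q$-solvable but $G-e$ (same vertex set, edge $e$ removed) is not $q$-solvable for every edge $e$ of $G$. *)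

(* Defs.v *)
From mathcomp Require Import all_boot.
Set Implicit Arguments.
Unset Strict Implicit.
Unset Printing Implicit Defensive.

(* A digraph on a finite vertex type V is a relation D : rel V; D u v means
   there is an arc u -> v, so N^-(v) = [pred u | D u v].  An undirected graph
   is a symmetric irreflexive relation (both arcs for each edge). *)

Definition config (V : finType) (q : nat) := {ffun V -> 'I_q}.

Definition is_Dfunction (V : finType) (D : rel V) (q : nat)
    (f : config V q -> config V q) : Prop :=
  forall (v : V) (x y : config V q),
    (forall u : V, D u v -> x u = y u) -> f x v = f y v.

Definition solvable (V : finType) (D : rel V) (q : nat) : Prop :=
  exists f : config V q -> config V q,
    @is_Dfunction V D q f /\ forall x : config V q, exists v : V, f x v = x v.

Definition remove_edge (V : finType) (D : rel V) (u w : V) : rel V :=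
  fun a b => D a b && ~~ (((a == u) && (b == w)) || ((a == w) && (b == u))).

Definition edge_critical (V : finType) (D : rel V) (q : nat) : Prop :=
  @solvable V D q /\ forall u w : V, D u w -> ~ @solvable V (remove_edge D u w) q.

Definition cycle_graph (n : nat) : rel 'I_n :=
  fun i j => (val j == (val i).+1 %% n) || (val i == (val j).+1 %% n).

(* Main.v *)
Require Import Defs.
From mathcomp Require Import all_boot zify.
Set Implicit Arguments. Unset Strict Implicit.

Lemma L1 (a1 a2 b1 b2 : 'I_3) : a1 != a2 -> b1 != b2 -> [|| a1 == b1, a1 == b2, a2 == b1 | a2 == b2].
Proof. by move: a1 a2 b1 b2; do 4! case=> [[|[|[|?]]] ?]. Qed.
Lemma L2 (g : 'I_3) : exists a1 a2 : 'I_3, [/\ a1 != a2, a1 != g & a2 != g].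
Proof.
case: g => [[|[|[|?]]] ?] //.
- by exists (@Ordinal 3 1 isT), (@Ordinal 3 2 isT).
- by exists (@Ordinal 3 0 isT), (@Ordinal 3 2 isT).
- by exists (@Ordinal 3 0 isT), (@Ordinal 3 1 isT).
Qed.
Lemma L3 (good : 'I_3 -> Prop) : (forall c1 c2, c1 != c2 -> good c1 \/ good c2) ->
  exists c1 c2, [/\ c1 != c2, good c1 & good c2].
Proof.
move=> H.
have H01 := H (@Ordinal 3 0 isT) (@Ordinal 3 1 isT) isT.
have H02 := H (@Ordinal 3 0 isT) (@Ordinal 3 2 isT) isT.
have H12 := H (@Ordinal 3 1 isT) (@Ordinal 3 2 isT) isT.
case: H01 => [g0|g1].
- case: H12 => [g1|g2]; [exists (@Ordinal 3 0 isT), (@Ordinal 3 1 isT) | exists (@Ordinal 3 0 isT), (@Ordinal 3 2 isT)]; by split.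
- case: H02 => [g0|g2]; [exists (@Ordinal 3 0 isT), (@Ordinal 3 1 isT) | exists (@Ordinal 3 1 isT), (@Ordinal 3 2 isT)]; by split.
Qed.

Definition upd (V : finType) (x : config V 3) (v : V) (a : 'I_3) : config V 3 :=
  [ffun u => if u == v then a else x u].
Lemma upd_eq (V : finType) (x : config V 3) v a : upd x v a v = a.
Proof. by rewrite /upd ffunE eqxx. Qed.
Lemma upd_ne (V : finType) (x : config V 3) v a u : u != v -> upd x v a u = x u.
Proof. by move=> H; rewrite /upd ffunE (negbTE H). Qed.

Section Path.
Variables (V : finType) (D : rel V) (n : nat) (s : nat -> V).
Hypothesis n1 : 1 < n.
Hypothesis sinj : forall i j, i < n -> j < n -> s i = s j -> i = j.
Hypothesis ssurj : forall v, exists2 i, i < n & v = s i.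
Hypothesis snb : forall i j, i < n -> j < n -> D (s j) (s i) -> j = i.+1 \/ j.+1 = i.
Variable f : config V 3 -> config V 3.
Hypothesis Df : is_Dfunction D f.

Lemma sne i j : i < n -> j < n -> i != j -> s i != s j.
Proof. move=> hi hj; apply: contra => /eqP /sinj; move=> /(_ hi hj) ->. by []. Qed.

Lemma dep i (x y : config V 3) : i < n ->
  (forall j, j < n -> (j = i.+1 \/ j.+1 = i) -> x (s j) = y (s j)) -> f x (s i) = f y (s i).
Proof.
move=> hi H; apply: Df => u Du.
have [j hj E] := ssurj u; subst u.
by apply: H => //; apply: snb.
Qed.

Definition P i a b := exists x : config V 3,
  [/\ x (s i) = a, x (s i.+1) = b & forall j, j <= i -> f x (s j) != x (s j)].
Definition Inv i := forall b, exists a1 a2, [/\ a1 != a2, P i a1 b & P i a2 b].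

Let x0 : config V 3 := [ffun => ord0].

Lemma common i c1 c2 : Inv i -> exists e, P i e c1 /\ P i e c2.
Proof.
move=> I; have [a1 [a2 [na P1 P2]]] := I c1; have [b1 [b2 [nb Q1 Q2]]] := I c2.
have := L1 na nb.
case/or4P => /eqP E.
- by exists a1; split => //; rewrite E.
- by exists a1; split => //; rewrite E.
- by exists a2; split => //; rewrite E.
- by exists a2; split => //; rewrite E.
Qed.

Lemma base : Inv 0.
Proof.
move=> b.
set g0 := f (upd x0 (s 1) b) (s 0).
have [a1 [a2 [na n1' n2']]] := L2 g0.
have s01 : s 0 != s 1 by apply: sne => //; apply: ltn_trans n1.
have HP : forall a, a != g0 -> P 0 a b.
  move=> a ha; exists (upd (upd x0 (s 1) b) (s 0) a); split.
  - by rewrite upd_eq.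
  - by rewrite upd_ne ?upd_eq // eq_sym.
  - move=> j; rewrite leqn0 => /eqP ->; rewrite upd_eq.
    suff -> : f (upd (upd x0 (s 1) b) (s 0) a) (s 0) = g0 by rewrite eq_sym.
    apply: dep; first by apply: ltn_trans n1.
    move=> j' hj' [-> | //]; by rewrite upd_ne // eq_sym.
by exists a1, a2; split => //; apply: HP.
Qed.

Lemma step i : i.+2 < n -> Inv i -> Inv i.+1.
Proof.
move=> hi I d.
have hi1 : i.+1 < n by apply: ltn_trans hi.
have hi0 : i < n by apply: ltn_trans hi1.
set g := fun a => f (upd (upd x0 (s i) a) (s i.+2) d) (s i.+1).
have s02 : s i != s i.+2 by apply: sne => //; rewrite neq_ltn ltnS leqnSn.
have s12 : s i.+1 != s i.+2 by apply: sne => //; rewrite neq_ltn ltnSn.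
have G : forall (x : config V 3) a, x (s i) = a -> x (s i.+2) = d -> f x (s i.+1) = g a.
  move=> x a xa xd; apply: dep => // j hj [-> | [->]]; first by rewrite upd_eq.
  by rewrite upd_ne // upd_eq.
have good : forall c a, P i a c -> g a != c -> P i.+1 c d.
  move=> c a [x [xa xc xw]] ga.
  exists (upd x (s i.+2) d); split.
  - by rewrite upd_ne.
  - by rewrite upd_eq.
  - move=> j; rewrite leq_eqVlt => /orP [/eqP -> | hj].
    + rewrite (G _ a); first by rewrite upd_ne // xc.
      * by rewrite upd_ne.
      * by rewrite upd_eq.
    + have hjn : j < n by lia.
      have sj : s j != s i.+2 by apply: sne => //; lia.
      rewrite upd_ne //.
      have -> : f (upd x (s i.+2) d) (s j) = f x (s j).
        apply: dep => // j' hj' H; rewrite upd_ne //.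
        apply: sne => //; case: H; lia.
      by apply: xw; lia.
have pw : forall c1 c2, c1 != c2 -> (exists a, P i a c1 /\ g a != c1) \/ (exists a, P i a c2 /\ g a != c2).
  move=> c1 c2 nc; have [e [Pe1 Pe2]] := common c1 c2 I.
  case E : (g e == c1).
  - right; exists e; split => //; by rewrite (eqP E).
  - by left; exists e; rewrite E.
have [c1 [c2 [nc [a1 [Pa1 ga1]] [a2 [Pa2 ga2]]]]] := L3 pw.
by exists c1, c2; split => //; [apply: (good c1 a1) | apply: (good c2 a2)].
Qed.

Lemma invs i : i.+1 < n -> Inv i.
Proof.
elim: i => [_|i IH hi]; first exact: base.
by apply: step => //; apply: IH; apply: ltn_trans hi.
Qed.

Lemma path_unsolvable_aux : ~ (forall x : config V 3, exists v, f x v = x v).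
Proof.
move=> Hf.
have [m hnm] : exists m, n = m.+2 by exists n.-2; lia.
have Iv : forall i, i.+1 < m.+2 -> Inv i by rewrite -hnm; apply: invs.
have dp := dep; rewrite hnm in dp.
pose g := fun a => f (upd x0 (s m) a) (s m.+1).
have hm : m < m.+2 by apply: ltn_trans (ltnSn _) (ltnSn _).
have G : forall (x : config V 3) a, x (s m) = a -> f x (s m.+1) = g a.
  move=> x a xa; apply: dp => // j hj [E | [->]]; first by move: hj; rewrite E ltnn.
  by rewrite upd_eq.
have [e [Pe1 Pe2]] := common (@Ordinal 3 0 isT) (@Ordinal 3 1 isT) (Iv m (ltnSn _)).
have : exists x : config V 3, forall j, j <= m.+1 -> f x (s j) != x (s j).
  case E : (g e == @Ordinal 3 0 isT).
  - case: Pe2 => x [xe x1 xw]; exists x => j; rewrite leq_eqVlt => /orP [/eqP -> | hj]; last by apply: xw.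
    by rewrite (G x e xe) (eqP E) x1.
  - case: Pe1 => x [xe x1 xw]; exists x => j; rewrite leq_eqVlt => /orP [/eqP -> | hj]; last by apply: xw.
    by rewrite (G x e xe) x1 E.
case=> x xw; have [v fv] := Hf x; have [i hi E] := ssurj v; subst v.
have hi2 : i <= m.+1 by lia.
by move: (xw i hi2); rewrite fv eqxx.
Qed.
End Path.

Lemma mod2 a n : a < n + n -> a %% n = if a < n then a else a - n.
Proof.
move=> h; case: ltnP => h2; first by rewrite modn_small.
have -> : a = (a - n) + n by lia.
by rewrite modnDr modn_small; lia.
Qed.

Lemma remove_edge_sym (V : finType) (D : rel V) u w : remove_edge D u w =2 remove_edge D w u.
Proof. by move=> a b; rewrite /remove_edge orbC. Qed.

Ltac splitifs := repeat match goal with |- context [if ?a < ?b then _ else _] => case: (ltnP a b) => ? end.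
Ltac splitifs2 := repeat (match goal with
  | H : context [if _ < _ then _ else _] |- _ => revert H
  | |- context [if ?a < ?b then _ else _] => case: (ltnP a b) => ? end).

Section Cyc.
Variable n : nat.
Hypothesis n2 : 2 < n.
Let np : 0 < n. Proof. by apply: ltn_trans n2. Qed.
Definition sg (w : 'I_n) (i : nat) : 'I_n := Ordinal (ltn_pmod (w + i) np).

Lemma path_hyps (u w : 'I_n) : (w : nat) = (u : nat).+1 %% n ->
  [/\ (forall i j, i < n -> j < n -> sg w i = sg w j -> i = j),
      (forall v, exists2 i, i < n & v = sg w i) &
      (forall i j, i < n -> j < n -> remove_edge (@cycle_graph n) u w (sg w j) (sg w i) -> j = i.+1 \/ j.+1 = i)].
Proof.
move=> hw.
have vv : forall x : 'I_n, val x = nat_of_ord x by [].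
have hu := ltn_ord u; have hw' := ltn_ord w.
have vsg : forall i, i < n -> (sg w i : nat) = if w + i < n then w + i else w + i - n.
  by move=> i hi; rewrite /= mod2 //; lia.
have hw2 : (w : nat) = if u.+1 < n then u.+1 else u.+1 - n.
  rewrite hw mod2 //; lia.
have hw3 : (w : nat) = u.+1 \/ (w:nat) + n = u.+1 by move: hw2; splitifs; lia.
clear hw2 hw.
split.
- move=> i j hi hj /(congr1 (@nat_of_ord n)); rewrite !vsg //.
  by splitifs; lia.
- move=> v; have hv := ltn_ord v; exists (if (v:nat) < w then v + n - w else v - w); first by splitifs; lia.
  apply: ord_inj; case: (ltnP v w) => ?; (rewrite vsg; last lia); splitifs; lia.
- move=> i j hi hj; rewrite /remove_edge /cycle_graph !vv.
  have e1 := vsg i hi; have e2 := vsg j hj.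
  have l1 := ltn_ord (sg w i); have l2 := ltn_ord (sg w j).
  case/andP => /orP [] /eqP E Hn; (rewrite mod2 in E; last lia);
  move: e1 e2 E; splitifs; move=> e1 e2 E; try lia;
  exfalso; move/negP: Hn; apply; apply/orP;
  first [ (left; apply/andP; split; apply/eqP; apply: ord_inj; lia)
        | (right; apply/andP; split; apply/eqP; apply: ord_inj; lia) ].
Qed.
End Cyc.
Definition FS : seq (seq nat) := [:: [:: 0; 1; 0; 0; 2; 2; 1; 1; 2]; [:: 1; 2; 1; 0; 2; 2; 0; 0; 1]; [:: 2; 1; 2; 1; 1; 0; 2; 0; 0]].
Definition FB : seq (seq nat) := [:: [:: 0; 1; 0; 0; 2; 2; 1; 1; 2]; [:: 2; 1; 1; 2; 2; 0; 0; 1; 0]; [:: 1; 1; 0; 2; 0; 0; 2; 1; 2]].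
Definition ES : seq (seq bool) := [:: [:: true; true; true; true; false; true; false; true; true; false; false; false; false; false; true; false; false; false; true; false; false; false; false; true; false; true; true; true; false; false; true; false; true; false; true; false; true; true; false; true; false; true; true; true; true; true; false; false; false; false; false; false; false; false; false; false; false; false; false; false; false; true; false; true; true; false; false; false; true; false; true; false; true; true; false; true; true; true; false; true; true]; [:: true; true; true; true; false; true; false; true; true; true; false; false; true; false; true; false; true; false; false; false; false; false; false; false; false; true; false; true; true; false; false; false; true; false; true; false; false; false; false; false; false; true; false; false; false; true; true; false; true; false; true; true; true; true; true; false; false; false; false; false; false; false; false; true; true; false; true; true; true; false; true; true; true; false; false; false; false; true; false; true; true]; [:: true; false; false; false; false; false; false; false; false; true; true; false; false; false; true; false; true; false; true; true; true; true; false; true; false; true; true; true; false; false; true; false; true; false; true; false; true; true; false; true; true; true; false; true; true; false; false; false; false; false; true; false; false; false; true; true; false; true; false; true; true; true; true; false; false; false; false; false; false; false; true; false; true; false; false; false; false; true; false; true; true]].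
Definition EB : seq (seq bool) := [:: [:: true; true; false; true; false; true; true; true; true; true; false; false; false; false; false; false; false; false; true; false; false; true; false; true; false; true; false; true; true; false; false; false; true; false; true; false; true; true; false; true; true; true; false; true; true; false; false; false; false; false; false; false; true; false; false; false; false; false; false; true; false; false; false; true; false; false; false; false; true; false; true; true; true; true; true; true; false; true; false; true; true]; [:: true; true; false; false; false; true; false; true; false; false; false; false; false; false; true; false; false; false; true; true; false; true; false; true; true; true; true; true; false; false; false; false; false; false; false; false; true; true; false; true; true; true; false; true; true; true; false; false; false; false; true; false; true; true; true; true; true; true; false; true; false; true; true; true; false; false; true; false; true; false; true; false; false; false; false; false; false; false; false; true; false]; [:: true; false; false; false; false; false; false; false; false; true; true; false; false; false; true; false; true; false; true; true; true; true; false; true; false; true; true; true; false; false; true; false; true; false; true; false; true; true; false; true; true; true; false; true; true; false; false; false; false; false; true; false; false; false; true; true; false; true; false; true; true; true; true; false; false; false; false; false; false; false; true; false; true; false; false; false; false; true; false; true; true]].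

Definition Ft (t : bool) (q a c : nat) : nat := nth 0 (nth [::] (if t then FS else FB) q) (3 * a + c).
Definition Et (t : bool) (q s e : nat) : bool := nth false (nth [::] (if t then ES else EB) q) (9 * s + e).

Lemma all_iota (P : pred nat) m : all P (iota 0 m) -> forall a, a < m -> P a.
Proof. by move=> /allP H a ha; apply: H; rewrite mem_iota. Qed.

Definition tb := [:: true; false].

Lemma Fbound_b : all (fun t => all (fun q => all (fun a => all (fun c => Ft t q a c < 3) (iota 0 3)) (iota 0 3)) (iota 0 3)) tb.
Proof. by vm_compute. Qed.
Lemma Fbound t q a c : q < 3 -> a < 3 -> c < 3 -> Ft t q a c < 3.
Proof.
move=> hq ha hc; have /allP/(_ t) := Fbound_b.
have ht : t \in tb by case: t.
move=> /(_ ht) H; move: (all_iota H hq) => H2; move: (all_iota H2 ha) => H3; exact: (all_iota H3 hc).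
Qed.

Definition nxt_t (t : bool) (q : nat) := if q < 2 then t else false.
Definition nxt_q (q : nat) := if q < 2 then q.+1 else 0.

Lemma Ctrans_b : all (fun t => all (fun q => all (fun a => all (fun b => all (fun c => all (fun e =>
   (Ft (nxt_t t q) (nxt_q q) a c != b) ==> Et (nxt_t t q) (nxt_q q) (3 * b + c) e ==> Et t q (3 * a + b) e)
   (iota 0 9)) (iota 0 3)) (iota 0 3)) (iota 0 3)) (iota 0 3)) tb.
Proof. by vm_compute. Qed.
Lemma Ctrans t q a b c e : q < 3 -> a < 3 -> b < 3 -> c < 3 -> e < 9 ->
  Ft (nxt_t t q) (nxt_q q) a c != b -> Et (nxt_t t q) (nxt_q q) (3 * b + c) e -> Et t q (3 * a + b) e.
Proof.
move=> hq ha hb hc he; have /allP/(_ t) := Ctrans_b.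
have ht : t \in tb by case: t.
move=> /(_ ht) H.
move: (all_iota H hq) => {}H; move: (all_iota H ha) => {}H; move: (all_iota H hb) => {}H;
move: (all_iota H hc) => {}H; move: (all_iota H he) => {}H.
by move=> h1 h2; move: H; rewrite h1 h2.
Qed.

Lemma Cbase_b : all (fun t => all (fun e => Et t 2 e e) (iota 0 9)) tb.
Proof. by vm_compute. Qed.
Lemma Cbase t e : e < 9 -> Et t 2 e e.
Proof.
move=> he; have /allP/(_ t) := Cbase_b.
have ht : t \in tb by case: t.
by move=> /(_ ht) H; apply: (all_iota H he).
Qed.

Lemma Cclose_b : all (fun a => all (fun b => all (fun c =>
   (Ft true 0 a c != b) ==> ~~ Et true 0 (3 * b + c) (3 * a + b)) (iota 0 3)) (iota 0 3)) (iota 0 3).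
Proof. by vm_compute. Qed.
Lemma Cclose a b c : a < 3 -> b < 3 -> c < 3 -> Ft true 0 a c != b -> ~~ Et true 0 (3 * b + c) (3 * a + b).
Proof.
move=> ha hb hc h; move: (all_iota Cclose_b ha) => H; move: (all_iota H hb) => {}H; move: (all_iota H hc) => {}H.
by move: H; rewrite h.
Qed.
Section Solv.
Variable k : nat.
Hypothesis hk : 0 < k.
Let n := 6 * k.
Let np : 0 < n. Proof. rewrite /n; lia. Qed.

Definition X (x : config 'I_n 3) (i : nat) : nat := x (Ordinal (ltn_pmod i np)).

Lemma X_lt x i : X x i < 3. Proof. exact: ltn_ord. Qed.
Lemma X_mod x i j : i %% n = j %% n -> X x i = X x j.
Proof. by move=> h; rewrite /X; congr (nat_of_ord (x _)); apply: ord_inj. Qed.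

Definition strat (x : config 'I_n 3) : config 'I_n 3 :=
  [ffun v : 'I_n => inord (Ft (v < 3) (v %% 3) (X x (v + n - 1)) (X x v.+1))].

Lemma strat_D : is_Dfunction (@cycle_graph n) strat.
Proof.
move=> v x y H; rewrite !ffunE.
have hv := ltn_ord v.
congr inord; congr Ft; rewrite /X; congr nat_of_ord; apply: H; rewrite /cycle_graph /=; apply/orP.
- left; apply/eqP.
  rewrite (@mod2 (v + n - 1) n); last lia.
  have vv : val v = nat_of_ord v by [].
  rewrite ?vv (@mod2 _ n); splitifs2; lia.
- by right.
Qed.

Lemma nxt_ok i : nxt_t (i < 3) (i %% 3) = (i.+1 < 3) /\ nxt_q (i %% 3) = i.+1 %% 3.
Proof.
rewrite /nxt_t /nxt_q; case: ltnP => h; split.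
- by apply/idP/idP; lia.
- lia.
- by apply/esym/negbTE; lia.
- lia.
Qed.

Lemma strat_win (x : config 'I_n 3) : exists v, strat x v = x v.
Proof.
suff /existsP [v /eqP hv] : [exists v, strat x v == x v] by exists v.
case E : [exists v, strat x v == x v] => //; move/negbT: E => /existsPn H.
set Y := X x.
have Yl : forall i, Y i < 3 by move=> i; apply: X_lt.
have wrong : forall i, i < n -> Ft (i < 3) (i %% 3) (Y (i + n - 1)) (Y i.+1) != Y i.
  move=> i hi; have := H (Ordinal hi); rewrite ffunE /=.
  have -> : x (Ordinal hi) = x (Ordinal (ltn_pmod i np)) by congr (x _); apply: ord_inj; rewrite /= modn_small.
  apply: contra => /eqP E; apply/eqP; apply: ord_inj; rewrite inordK; last by apply: Fbound => //; lia.
  by rewrite E.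
have Yn : Y n = Y 0 by apply: X_mod; rewrite modnn mod0n.
set e := 3 * Y n.-1 + Y n.
have he : e < 9 by have := Yl n.-1; have := Yl n; rewrite /e; lia.
pose P i := Et (i < 3) (i %% 3) (3 * Y i + Y i.+1) e.
have Pn : P n.-1.
  rewrite /P; have -> : n.-1 %% 3 = 2 by rewrite /n; lia.
  have -> : n.-1.+1 = n by rewrite /n; lia.
  exact: Cbase.
have Pstep : forall i, i.+1 < n -> P i.+1 -> P i.
  move=> i hi; rewrite /P => HP.
  have w := wrong i.+1 hi.
  have E1 : Y (i.+1 + n - 1) = Y i.
    apply: X_mod; have -> : i.+1 + n - 1 = i + n by lia.
    by rewrite modnDr.
  rewrite E1 in w.
  have := @Ctrans (i < 3) (i %% 3) (Y i) (Y i.+1) (Y i.+2) e.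
  case: (nxt_ok i) => -> ->; apply => //; lia.
have P0 : forall d, d <= n.-1 -> P (n.-1 - d).
  elim=> [|d IH] hd; first by rewrite subn0.
  apply: Pstep; first lia.
  have -> : (n.-1 - d.+1).+1 = n.-1 - d by lia.
  by apply: IH; lia.
have := P0 n.-1 (leqnn _); rewrite subnn /P /=.
have w0 := wrong 0 np; rewrite add0n /= in w0.
have := Cclose (Yl n.-1) (Yl 0) (Yl 1).
have E0 : n - 1 = n.-1 by lia.
rewrite E0 in w0.
by rewrite /e Yn => /(_ w0) /negbTE ->.
Qed.
End Solv.

Theorem theorem17 (k : nat) (hk : 0 < k) :
  @edge_critical 'I_(6 * k) (@cycle_graph (6 * k)) 3.
Proof.
have n2 : 2 < 6 * k by lia.
split.
  by exists (strat hk); split; [exact: strat_D | exact: strat_win].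
have main : forall u w : 'I_(6 * k), (w : nat) = (u : nat).+1 %% (6 * k) ->
    ~ solvable (remove_edge (@cycle_graph (6 * k)) u w) 3.
  move=> u w hw [f [Df Hf]].
  have [h1 h2 h3] := path_hyps n2 hw.
  have n1 : 1 < 6 * k by lia.
  exact: (path_unsolvable_aux n1 h1 h2 h3 Df Hf).
move=> u w; rewrite /cycle_graph => /orP [] /eqP E.
- by apply: main.
- move=> [f [Df Hf]]; apply: (main w u E); exists f; split => // v x y H.
  by apply: Df => z hz; apply: H; rewrite remove_edge_sym.
Qed.
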